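(* Let $2\leq k<n$, let $K\subset\mathbb{C}^n$ be a convex body and let $p_0$ be a point in the interior of $K$. If for every complex $k$-dimensional affine subspace $P$ through $p_0$ the section $P\cap K$ is a (complex, $k$-dimensional) ellipsoid in $P$, then $K$ is an ellipsoid.
   Context: A convex body is a compact convex subset of $\mathbb{C}^n$ with nonempty interior. A (complex) ellipsoid in a complex affine space of dimension $m$ is the image of the closed Euclidean unit ball of $\mathbb{C}^m$ under an injective complex affine map into that space. *)

(* Defs.v *)
From HB Require Import structures.
From mathcomp Require Import all_boot all_order all_algebra.
From mathcomp Require Import all_classical all_reals all_analysis.
From mathcomp Require Import complex.
Import Order.TTheory GRing.Theory Num.Theory.
Import numFieldNormedType.Exports.

Set Implicit Arguments.
Unset Strict Implicit.
Unset Printing Implicit Defensive.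

Local Open Scope ring_scope.
Local Open Scope classical_set_scope.

(* The complex numbers over R, viewed as a numFieldType so that
   MathComp-Analysis equips it (and 'rV[Cplx R]_n = C^n) with its
   usual (Euclidean / product) topology. *)
Definition Cplx (R : realType) : numFieldType := R[i].

Definition convex_set (R : realType) (n : nat) (K : set 'rV[Cplx R]_n) : Prop :=
  forall x y, K x -> K y -> forall t : R, 0 <= t <= 1 ->
    K (((t%:C)%C : Cplx R) *: x + (((1 - t)%:C)%C : Cplx R) *: y).

Definition convex_body (R : realType) (n : nat) (K : set 'rV[Cplx R]_n) : Prop :=
  [/\ convex_set K, compact K & interior K !=set0].

Definition unit_ball (R : realType) (m : nat) : set 'rV[Cplx R]_m :=
  [set w | \sum_(i < m) `|w ord0 i| ^+ 2 <= 1].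

(* The complex affine subspace p0 + (row space of A); when A is row_free
   (rank k) this is a complex affine subspace of dimension k through p0,
   and every such subspace arises this way. *)
Definition affine_span (R : realType) (k n : nat)
    (p0 : 'rV[Cplx R]_n) (A : 'M[Cplx R]_(k, n)) : set 'rV[Cplx R]_n :=
  [set p0 + u *m A | u in [set: 'rV[Cplx R]_k]].

(* E is an m-dimensional complex ellipsoid in the (affine) space P:
   the image of the closed unit ball of C^m under an injective complex
   affine map C^m -> P, w |-> c + w *m B (B row_free = injective). *)
Definition ellipsoid_in (R : realType) (m n : nat)
    (P : set 'rV[Cplx R]_n) (E : set 'rV[Cplx R]_n) : Prop :=
  exists (c : 'rV[Cplx R]_n) (B : 'M[Cplx R]_(m, n)),
    [/\ row_free B, (forall w, P (c + w *m B)) &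
        E = [set c + w *m B | w in @unit_ball R m]].

(* Main.v *)
Require Import Defs.
From HB Require Import structures.
From mathcomp Require Import all_boot all_order all_algebra.
From mathcomp Require Import all_classical all_reals all_analysis.
From mathcomp Require Import complex.
From mathcomp Require Import ring lra.
Import Order.TTheory GRing.Theory Num.Theory.
Import numFieldNormedType.Exports.
Local Open Scope ring_scope.
Local Open Scope classical_set_scope.


Section W1.
Variable R : realType.
Implicit Types x y : Cplx R.

Lemma ReD x y : complex.Re (x + y) = complex.Re x + complex.Re y. Proof. by case: x => ? ?; case: y => ? ?; reflexivity. Qed.
Lemma ImD x y : complex.Im (x + y) = complex.Im x + complex.Im y. Proof. by case: x => ? ?; case: y => ? ?; reflexivity. Qed.
Lemma ReN x : complex.Re (- x) = - complex.Re x. Proof. by case: x => ? ?; reflexivity. Qed.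
Lemma ImN x : complex.Im (- x) = - complex.Im x. Proof. by case: x => ? ?; reflexivity. Qed.
Lemma ReR (t : R) x : complex.Re ((t%:C)%C * x) = t * complex.Re x.
Proof. by case: x => a b /=; ring. Qed.
Lemma ImR (t : R) x : complex.Im ((t%:C)%C * x) = t * complex.Im x.
Proof. by case: x => a b /=; ring. Qed.
Lemma Rei x : complex.Re ('i%C * x) = - complex.Im x.
Proof. by case: x => a b /=; ring. Qed.
Lemma Imi x : complex.Im ('i%C * x) = complex.Re x.
Proof. by case: x => a b /=; ring. Qed.


Local Notation cRe := complex.Re.
Local Notation cIm := complex.Im.

Definition nR m (u : 'rV[Cplx R]_m) : R :=
  \sum_i (cRe (u ord0 i) ^+ 2 + cIm (u ord0 i) ^+ 2).
Definition ipR m (u v : 'rV[Cplx R]_m) : R :=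
  \sum_i (cRe (u ord0 i) * cRe (v ord0 i) + cIm (u ord0 i) * cIm (v ord0 i)).

Arguments nR {m}.
Arguments ipR {m}.

Section rows.
Variable m : nat.
Implicit Types u v w : 'rV[Cplx R]_m.

Lemma nRD u v : nR (u + v) = nR u + 2 * ipR u v + nR v.
Proof.
rewrite /nR /ipR mulr_sumr -!big_split; apply: eq_bigr => i _ /=.
rewrite mxE ReD ImD; ring.
Qed.

Lemma nRN u : nR (- u) = nR u.
Proof. by apply: eq_bigr => i _; rewrite mxE ReN ImN !sqrrN. Qed.

Lemma nRZ (t : R) u : nR ((t%:C)%C *: u) = t ^+ 2 * nR u.
Proof.
rewrite /nR mulr_sumr; apply: eq_bigr => i _.
rewrite mxE ReR ImR; ring.
Qed.

Lemma nRi u : nR ('i%C *: u) = nR u.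
Proof.
apply: eq_bigr => i _.
rewrite mxE Rei Imi; ring.
Qed.

Lemma ipRC u v : ipR u v = ipR v u.
Proof. by apply: eq_bigr => i _; rewrite mulrC [X in _ + X]mulrC. Qed.

Lemma ipRD u u' v : ipR (u + u') v = ipR u v + ipR u' v.
Proof.
rewrite /ipR -big_split; apply: eq_bigr => i _ /=.
rewrite mxE ReD ImD; ring.
Qed.

Lemma ipRZ (t : R) u v : ipR ((t%:C)%C *: u) v = t * ipR u v.
Proof.
rewrite /ipR mulr_sumr; apply: eq_bigr => i _.
rewrite mxE ReR ImR; ring.
Qed.

Lemma ipRN u v : ipR (- u) v = - ipR u v.
Proof.
rewrite /ipR -sumrN; apply: eq_bigr => i _.
rewrite mxE ReN ImN; ring.
Qed.

Lemma ipRii u v : ipR ('i%C *: u) ('i%C *: v) = ipR u v.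
Proof.
apply: eq_bigr => i _.
rewrite !mxE !Rei !Imi; ring.
Qed.

Lemma nR_ge0 u : 0 <= nR u.
Proof. by apply: sumr_ge0 => i _; rewrite addr_ge0 // sqr_ge0. Qed.

Lemma nR_eq0 u : nR u = 0 -> u = 0.
Proof.
move=> /eqP; rewrite psumr_eq0; last by move=> i _; rewrite addr_ge0 // sqr_ge0.
move=> /allP H; apply/rowP => i; rewrite mxE.
have /implyP := H i (mem_index_enum i).
rewrite paddr_eq0 ?sqr_ge0 // !sqrf_eq0 => /(_ isT) /andP [/eqP h1 /eqP h2].
by move: h1 h2; case: (u ord0 i) => a b /= -> ->.
Qed.

Lemma nR_ball u : (\sum_(i < m) `|u ord0 i| ^+ 2 <= 1) = (nR u <= 1).
Proof.
have -> : \sum_(i < m) `|u ord0 i| ^+ 2 = (nR u)%:C%C.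
  rewrite /nR rmorph_sum; apply: eq_bigr => i _.
  by rewrite -add_Re2_Im2.
by rewrite -[1]/((1 : R)%:C%C) lecR.
Qed.

End rows.
End W1.


Section W2.
Variable R : realType.

Definition qroot (a b : R) (sg : bool) : R :=
  (- b + (if sg then 1 else -1) * Num.sqrt (b ^+ 2 + a)) / a.

Lemma qfactor (a b t : R) : 0 < a ->
  a * t ^+ 2 + 2 * b * t - 1 = a * (t - qroot a b true) * (t - qroot a b false).
Proof.
move=> a0; rewrite /qroot.
have hq : Num.sqrt (b ^+ 2 + a) ^+ 2 = b ^+ 2 + a.
  by rewrite sqr_sqrtr // addr_ge0 ?sqr_ge0 ?ltW.
have an : a != 0 by rewrite gt_eqF.
set q := Num.sqrt _ in hq *.
have ha : a = q ^+ 2 - b ^+ 2 by rewrite hq; ring.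
move: an; rewrite ha => an.
by field.
Qed.

Lemma qsqrt_gt (a b : R) : 0 < a -> `|b| < Num.sqrt (b ^+ 2 + a).
Proof.
move=> a0; rewrite -sqrtr_sqr ltr_sqrt; first by rewrite ltrDl.
by rewrite ltr_wpDl ?sqr_ge0.
Qed.

Lemma qroot_pos (a b : R) : 0 < a -> 0 < qroot a b true.
Proof.
move=> a0; rewrite /qroot /= mul1r divr_gt0 //.
have := qsqrt_gt a b a0; have := ler_norm b; move=> ? ?; lra.
Qed.

Lemma qroot_neg (a b : R) : 0 < a -> qroot a b false < 0.
Proof.
move=> a0; rewrite /qroot /= mulN1r pmulr_llt0 ?invr_gt0 //.
have := qsqrt_gt a b a0; have := ler_norm (- b); rewrite normrN; move=> ? ?; lra.
Qed.

Lemma quad_uniq (a1 b1 a2 b2 : R) : 0 < a1 -> 0 < a2 ->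
  (forall t, (a1 * t ^+ 2 + 2 * b1 * t <= 1) = (a2 * t ^+ 2 + 2 * b2 * t <= 1)) ->
  a1 = a2 /\ b1 = b2.
Proof.
move=> h1 h2 H.
have F1 t := @qfactor a1 b1 t h1; have F2 t := @qfactor a2 b2 t h2.
have P1 := qroot_pos a1 b1 h1; have P2 := qroot_pos a2 b2 h2.
have N1 := qroot_neg a1 b1 h1; have N2 := qroot_neg a2 b2 h2.
set r1 := qroot a1 b1 true in F1 P1; set s1 := qroot a1 b1 false in F1 N1.
set r2 := qroot a2 b2 true in F2 P2; set s2 := qroot a2 b2 false in F2 N2.
have E t : (a1 * (t - r1) * (t - s1) <= 0) = (a2 * (t - r2) * (t - s2) <= 0).
  by rewrite -F1 -F2 !subr_le0.
have key (x y u v : R) : 0 < x -> 0 < y -> u - v <= 0 -> 0 < u -> u + y * 0 = u.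
  by move=> *; rewrite mulr0 addr0.
have L (a r s : R) : 0 < a -> (a * (r - r) * (r - s) <= 0).
  by move=> _; rewrite subrr mulr0 mul0r.
have rr : r1 = r2.
  apply/eqP; rewrite eq_le; apply/andP; split.
    have := L a1 r1 s1 h1; rewrite E => H3.
    have : (r1 - r2) * (r1 - s2) <= 0.
      by rewrite -(pmulr_rle0 _ h2) mulrA.
    rewrite pmulr_lle0 ?subr_gt0 ?(lt_trans N2 P1) //; lra.
  have := L a2 r2 s2 h2; rewrite -E => H3.
  have : (r2 - r1) * (r2 - s1) <= 0.
    by rewrite -(pmulr_rle0 _ h1) mulrA.
  rewrite pmulr_lle0 ?subr_gt0 ?(lt_trans N1 P2) //; lra.
have L2 (a r s : R) : (a * (s - r) * (s - s) <= 0).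
  by rewrite subrr mulr0.
have S (a x y : R) : 0 < a -> (a * x * y <= 0) = (x * y <= 0).
  by move=> ha; rewrite -mulrA pmulr_rle0.
have ss : s1 = s2.
  apply/eqP; rewrite eq_le; apply/andP; split.
    have := L2 a2 r2 s2; rewrite -E S // nmulr_rle0 ?subr_lt0 ?(lt_trans N2 P1) //.
    lra.
  have := L2 a1 r1 s1; rewrite E S // nmulr_rle0 ?subr_lt0 ?(lt_trans N1 P2) //.
  lra.
have F10 := F1 0; have F20 := F2 0; have F11 := F1 1; have F21 := F2 1.
rewrite -rr -ss in F20 F21.
have rs0 : r1 * s1 != 0 by rewrite mulf_neq0 ?(gt_eqF P1) ?(lt_eqF N1).
have aa : a1 = a2.
  apply: (mulIf rs0); rewrite !expr0n /= in F10 F20; nra.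
split => //.
rewrite -aa !expr1n in F21; rewrite !expr1n in F11; nra.
Qed.

End W2.


Section W3.
Variable R : realType.
Local Notation cRe := complex.Re.
Local Notation cIm := complex.Im.
Arguments nR {R m}.
Arguments ipR {R m}.

Lemma pos_real (x : Cplx R) : 0 < x -> x = ((cRe x)%:C)%C.
Proof.
by case: x => a b; rewrite ltcE /= => /andP [/eqP -> _].
Qed.

Lemma int_dir (n : nat) (K : set 'rV[Cplx R]_n) (q v : 'rV[Cplx R]_n) :
  interior K q -> exists e : R, 0 < e /\ K (q + ((e%:C)%C) *: v).
Proof.
rewrite /interior /= => /nbhs_normP [e /= e0 He].
set N := `|v|.
have N0 : 0 <= N by rewrite /N normr_ge0.
have N1 : 0 < N + 1 by rewrite ltr_wpDl.
have x0 : 0 < e / (N + 1) by rewrite divr_gt0.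
exists (cRe (e / (N + 1))); split.
  by move: x0; rewrite ltcE => /andP [].
rewrite -pos_real //; apply: He => /=.
rewrite opprD addrA subrr sub0r normrN normrZ gtr0_norm //.
by rewrite mulrAC ltr_pdivrMr // mulrDr mulr1 ltrDl.
Qed.


Lemma nR0 m : nR (0 : 'rV[Cplx R]_m) = 0.
Proof. by rewrite -(scale0r (0 : 'rV[Cplx R]_m)) -[0 : Cplx R]/((0:R)%:C)%C nRZ expr0n mul0r. Qed.

Lemma ipRR m (u : 'rV[Cplx R]_m) : ipR u u = nR u.
Proof. by apply: eq_bigr => i _; rewrite !expr2. Qed.

Lemma ipR0 m (v : 'rV[Cplx R]_m) : ipR 0 v = 0.
Proof. by rewrite -(scale0r (0 : 'rV[Cplx R]_m)) -[0 : Cplx R]/((0:R)%:C)%C ipRZ mul0r. Qed.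

Lemma ipRNr m (u v : 'rV[Cplx R]_m) : ipR u (- v) = - ipR u v.
Proof. by rewrite ipRC ipRN ipRC. Qed.

Lemma aux_contra {e N : R} : 0 < e -> 1 - N <= 0 -> 0 <= N ->
  e ^+ 2 * N - 2 * (e * - N) <= 1 - N -> False.
Proof. move=> *; nra. Qed.

Lemma local_rep (n k : nat) (K : set 'rV[Cplx R]_n) (p0 : 'rV[Cplx R]_n)
    (A : 'M[Cplx R]_(k, n)) :
  row_free A -> interior K p0 ->
  ellipsoid_in k (affine_span p0 A) (affine_span p0 A `&` K) ->
  exists (S : 'M[Cplx R]_k) (z : 'rV[Cplx R]_k) (d : R),
    [/\ S \in unitmx, 0 < d &
      forall u, K (p0 + u *m A) <-> nR (u *m S) - 2 * ipR (u *m S) z <= d].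
Proof.
move=> Afree p0int [c [B [Bfree Bin Eeq]]].
have [u0 _ hu0] : affine_span p0 A c by move: (Bin 0); rewrite mul0mx addr0.
have /choice [f hf] : forall i : 'I_k, exists u, p0 + u *m A = c + delta_mx 0 i *m B.
  by move=> i; have [u _ hu] := Bin (delta_mx 0 i); exists u.
pose T : 'M[Cplx R]_k := \matrix_i (f i - u0).
have BT : B = T *m A.
  apply/row_matrixP => i; rewrite row_mul rowK mulmxBl rowE.
  apply: (addrI c); rewrite -hf -hu0.
  by rewrite -addrA; congr (p0 + _); rewrite addrC subrK.
have Tfree : row_free T.
  have := mxrankM_maxl T A; rewrite -BT (eqP Bfree) => h.
  by rewrite /row_free eqn_leq rank_leq_row h.
have Tu : T \in unitmx by rewrite -row_free_unit.
pose S := invmx T; pose z := u0 *m S.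
have key u : K (p0 + u *m A) <-> nR ((u - u0) *m S) <= 1.
  split.
  - move=> Ku.
    have : (affine_span p0 A `&` K) (p0 + u *m A) by split => //; exists u.
    rewrite Eeq => -[w wball hw].
    have <- : u0 + w *m T = u.
      apply: (row_free_inj Afree); rewrite mulmxDl -mulmxA -BT.
      by apply: (addrI p0); rewrite addrA hu0 hw.
    rewrite addrAC subrr add0r /S mulmxK //.
    by rewrite -nR_ball.
  - move=> h.
    have : (affine_span p0 A `&` K) (c + ((u - u0) *m S) *m B).
      rewrite Eeq; exists ((u - u0) *m S) => //.
      by rewrite /unit_ball /= nR_ball.
    have -> : c + ((u - u0) *m S) *m B = p0 + u *m A.
      rewrite BT mulmxA /S mulmxKV // -hu0 mulmxBl.
      by rewrite -addrA [u0 *m A + _]addrC subrK.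
    by case.
pose d := 1 - nR z.
have key' u : K (p0 + u *m A) <-> nR (u *m S) - 2 * ipR (u *m S) z <= d.
  rewrite key mulmxBl nRD ipRNr nRN /d.
  by split => h; lra.
have Kp0 : K p0 := nbhs_singleton p0int.
have d0 : 0 < d.
  rewrite ltNge; apply/negP => hd.
  have [e [e0 Ke]] := @int_dir _ K p0 (- (u0 *m A)) p0int.
  have : K (p0 + ((e%:C)%C *: - u0) *m A) by rewrite -scalemxAl mulNmx.
  rewrite key' -scalemxAl mulNmx nRZ nRN ipRZ ipRN ipRR -/z.
  have := @nR_ge0 _ _ z; rewrite /d in hd *.
  by move=> h1 h2; exact: (aux_contra e0 hd h1 h2).
exists S, z, d; split => //; by rewrite /S unitmx_inv.
Qed.

End W3.


Section W4.
Variable F : fieldType.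

Lemma plane_exists (k n : nat) (x y : 'rV[F]_n) : (2 <= k)%N -> (k <= n)%N ->
  exists A : 'M[F]_(k, n), [/\ row_free A, exists u, x = u *m A & exists v, y = v *m A].
Proof.
move=> hk hkn.
case: n x y hkn => [|n] x y hkn; first by move: (leq_trans hk hkn).
pose X := col_mx x y.
pose S j := (\sum_(0 <= i < j) <<(delta_mx 0 (inord i) : 'rV[F]_n.+1)>>)%MS.
pose f j := \rank (X + S j)%MS.
have f0 : (f 0 <= k)%N.
  rewrite /f /S big_geq // addsmx0.
  by apply: leq_trans (rank_leq_row _) hk.
have fS j : (f j.+1 <= (f j).+1)%N.
  rewrite /f /S big_nat_recr //= addsmxA.
  apply: leq_trans (mxrank_adds_leqif _ _) _.
  by rewrite genmxE -[X in (_ <= X)%N]addn1 leq_add2l rank_leq_row.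
have fn : (n.+1 <= f n.+1)%N.
  have h1 : ((1%:M : 'M[F]_n.+1) <= X + S n.+1)%MS.
    apply/row_subP => i; rewrite row1.
    apply: (submx_trans _ (addsmxSr _ _)).
    have -> : (delta_mx 0 i : 'rV[F]_n.+1) = delta_mx 0 (inord i) by rewrite inord_val.
    rewrite /S big_mkord; apply: (sumsmx_sup (Ordinal (ltn_ord i))) => //.
    by rewrite genmxE.
  by have := mxrankS h1; rewrite mxrank1.
have ivt j : (j <= n.+1)%N -> (k <= f j)%N -> exists j', f j' = k.
  elim: j => [|j IH] hj hfj.
    by exists 0%N; apply/eqP; rewrite eqn_leq f0 hfj.
  case: (leqP k (f j)) => h.
    by apply: IH => //; apply: ltnW.
  exists j.+1; apply/eqP; rewrite eqn_leq hfj andbT.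
  by apply: leq_trans (fS j) h.
have [j hj] := ivt n.+1 (leqnn _) (leq_trans hkn fn).
have gen (r : nat) (A0 : 'M[F]_(r, n.+1)) : r = k -> row_free A0 -> (X <= A0)%MS ->
    exists A : 'M[F]_(k, n.+1), [/\ row_free A, exists u, x = u *m A & exists v, y = v *m A].
  move=> er; subst r => fr sub.
  have /andP [sx sy] : ((x <= A0) && (y <= A0))%MS by rewrite -col_mx_sub.
  exists A0; split => //.
  - by have [u ->] := submxP sx; exists u.
  - by have [v ->] := submxP sy; exists v.
apply: (gen _ (row_base (X + S j)%MS)) => //.
- exact: row_base_free.
- by rewrite eq_row_base addsmxSl.
Qed.

End W4.


Section W5.
Variable R : realType.
Arguments nR {R m}.
Arguments ipR {R m}.
Arguments qroot {R}.
Arguments qfactor {R}.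
Arguments qroot_pos {R}.
Arguments qroot_neg {R}.
Arguments quad_uniq {R}.
Variables (n k : nat) (K : set 'rV[Cplx R]_n) (p0 : 'rV[Cplx R]_n).
Hypothesis hk : (2 <= k)%N.
Hypothesis hkn : (k < n)%N.
Hypothesis p0int : interior K p0.
Hypothesis hyp : forall A : 'M[Cplx R]_(k, n), row_free A ->
     ellipsoid_in k (affine_span p0 A) (affine_span p0 A `&` K).

Definition lineP (x : 'rV[Cplx R]_n) : set (R * R) :=
  [set p | 0 < p.1 /\ forall t : R, K (p0 + ((t%:C)%C) *: x) <-> p.1 * t ^+ 2 + 2 * p.2 * t <= 1].
Definition lcoef x := xget (0, 0) (lineP x).
Fact aa_key : unit. Proof. exact: tt. Qed.
Definition aa := locked_with aa_key (fun x => (lcoef x).1).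
Lemma aaE x : aa x = (lcoef x).1. Proof. by rewrite /aa unlock. Qed.
Fact bb_key : unit. Proof. exact: tt. Qed.
Definition bb := locked_with bb_key (fun x => (lcoef x).2).
Lemma bbE x : bb x = (lcoef x).2. Proof. by rewrite /bb unlock. Qed.

Lemma unbounded (al be : R) : 0 < al -> exists t, 1 < al * t ^+ 2 + 2 * be * t.
Proof.
move=> a0; exists (qroot al be true + 1).
have F := qfactor al be (qroot al be true + 1) a0.
have P := qroot_pos al be a0; have N := qroot_neg al be a0.
rewrite -subr_gt0 F addrAC subrr add0r mulr1 pmulr_rgt0 //.
by rewrite subr_gt0 (lt_trans N) // ltr_pwDl.
Qed.

Lemma lcoef_eq x (al be : R) : lineP x (al, be) -> lcoef x = (al, be).
Proof.
move=> hP; rewrite /lcoef; case: xgetP; last by move=> /(_ _ hP).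
move=> p _ [p1 hp]; case: hP => /= a0 ha.
have [e1 e2] : p.1 = al /\ p.2 = be.
  apply: quad_uniq => // t; apply/idP/idP => h.
  - by apply/ha/hp.
  - by apply/hp/ha.
by case: p e1 e2 {hp p1} => /= ? ? -> ->.
Qed.

Lemma lcoef0 : lcoef 0 = (0, 0).
Proof.
rewrite /lcoef; case: xgetP => // p _ [p1 hp].
have [t ht] := unbounded p.1 p.2 p1.
have : K (p0 + ((t%:C)%C) *: 0) by rewrite scaler0 addr0; exact: nbhs_singleton.
by move=> /hp; rewrite leNgt ht.
Qed.

Arguments local_rep {R n k K p0 A}.

Lemma ipRZr m (u v : 'rV[Cplx R]_m) (t : R) : ipR u ((t%:C)%C *: v) = t * ipR u v.
Proof. by rewrite ipRC ipRZ ipRC. Qed.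

Lemma scale_ineq (N I d t c : R) : 0 < d -> c ^+ 2 = d^-1 ->
  (c ^+ 2 * N * t ^+ 2 + 2 * (- c ^+ 2 * I) * t <= 1) = (t ^+ 2 * N - 2 * (t * I) <= d).
Proof.
move=> d0 cc.
have -> : c ^+ 2 * N * t ^+ 2 + 2 * (- c ^+ 2 * I) * t = (t ^+ 2 * N - 2 * (t * I)) * d^-1.
  by rewrite -cc; ring.
by rewrite ler_pdivrMr // mul1r.
Qed.

Lemma nR_gt0 m (u : 'rV[Cplx R]_m) : u != 0 -> 0 < nR u.
Proof.
move=> u0; rewrite lt_def nR_ge0 andbT; apply/eqP => /nR_eq0 h.
by rewrite h eqxx in u0.
Qed.

Lemma plane_rep (A : 'M[Cplx R]_(k, n)) : row_free A ->
  exists (S : 'M[Cplx R]_k) (z : 'rV[Cplx R]_k),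
    [/\ S \in unitmx, (forall w, aa (w *m A) = nR (w *m S)),
        (forall w, bb (w *m A) = ipR (w *m S) z) &
        (forall w, K (p0 + w *m A) <-> aa (w *m A) + 2 * bb (w *m A) <= 1)].
Proof.
move=> Af; have [S0 [z0 [d [S0u d0 HK]]]] := local_rep Af p0int (hyp A Af).
pose c := (Num.sqrt d)^-1.
have c0 : 0 < c by rewrite invr_gt0 sqrtr_gt0.
have cc : c ^+ 2 = d^-1 by rewrite exprVn sqr_sqrtr // ltW.
pose S := (c%:C)%C *: S0; pose z := ((- c)%:C)%C *: z0.
have Su : S \in unitmx.
  rewrite unitmxZ // unitfE; apply/eqP => /(congr1 (@complex.Re R)) /=.
  by move/eqP; rewrite gt_eqF.
have nRS w : nR (w *m S) = c ^+ 2 * nR (w *m S0) by rewrite -scalemxAr nRZ.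
have ipS w : ipR (w *m S) z = - c ^+ 2 * ipR (w *m S0) z0.
  by rewrite -scalemxAr ipRZ ipRZr; ring.
have line w : w != 0 -> lineP (w *m A) (nR (w *m S), ipR (w *m S) z).
  move=> w0; split => /=.
    apply: nR_gt0; apply: contra w0 => /eqP h.
    by rewrite -(mulmxK Su w) h mul0mx.
  move=> t; rewrite scalemxAl HK nRS ipS -scalemxAl nRZ ipRZ (scale_ineq _ _ _ _ _ d0 cc).
  by [].
have coefw w : lcoef (w *m A) = (nR (w *m S), ipR (w *m S) z).
  have [->|w0] := eqVneq w 0; last exact: lcoef_eq (line w w0).
  by rewrite !mul0mx lcoef0 nR0 ipR0.
exists S, z; split => //.
- by move=> w; rewrite aaE coefw.
- by move=> w; rewrite bbE coefw.
move=> w; rewrite aaE bbE coefw /= HK nRS ipS.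
have := scale_ineq (nR (w *m S0)) (ipR (w *m S0) z0) d 1 c d0 cc.
rewrite !expr1n !mulr1 !mul1r => ->.
by [].
Qed.

End W5.


Section W6.
Variable R : realType.
Arguments nR {R m}.
Arguments ipR {R m}.
Variables (n k : nat) (K : set 'rV[Cplx R]_n) (p0 : 'rV[Cplx R]_n).
Hypothesis hk : (2 <= k)%N.
Hypothesis hkn : (k < n)%N.
Hypothesis p0int : interior K p0.
Hypothesis hyp : forall A : 'M[Cplx R]_(k, n), row_free A ->
     ellipsoid_in k (affine_span p0 A) (affine_span p0 A `&` K).

Local Notation V := 'rV[Cplx R]_n.
Local Notation a := (aa R n K p0).
Local Notation b := (bb R n K p0).
Local Notation cRe := complex.Re.
Local Notation cIm := complex.Im.

Lemma pair_rep (x y : V) : exists (A : 'M[Cplx R]_(k, n)) (S : 'M[Cplx R]_k)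
   (z u v : 'rV[Cplx R]_k),
  [/\ S \in unitmx, x = u *m A, y = v *m A &
      [/\ (forall w, a (w *m A) = nR (w *m S)),
      (forall w, b (w *m A) = ipR (w *m S) z) &
      (forall w, K (p0 + w *m A) <-> a (w *m A) + 2 * b (w *m A) <= 1)]].
Proof.
have [A [Af [u ->] [v ->]]] := plane_exists _ _ _ x y hk (ltnW hkn).
have [S [z [Su ha hb hK]]] := plane_rep _ _ _ _ _ p0int hyp _ Af.
by exists A, S, z, u, v; split => //; split.
Qed.

Lemma a0 : a 0 = 0.
Proof. by rewrite aaE lcoef0. Qed.

Lemma b0 : b 0 = 0.
Proof. by rewrite bbE lcoef0. Qed.

Lemma aZ (t : R) x : a ((t%:C)%C *: x) = t ^+ 2 * a x.
Proof.
have [A [S [z [u [v [Su -> _ [ha _ _]]]]]]] := pair_rep x x.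
by rewrite scalemxAl !ha -scalemxAl nRZ.
Qed.

Lemma ai x : a ('i%C *: x) = a x.
Proof.
have [A [S [z [u [v [Su -> _ [ha _ _]]]]]]] := pair_rep x x.
by rewrite scalemxAl !ha -scalemxAl nRi.
Qed.

Lemma aN x : a (- x) = a x.
Proof.
have [A [S [z [u [v [Su -> _ [ha _ _]]]]]]] := pair_rep x x.
by rewrite -mulNmx !ha mulNmx nRN.
Qed.

Lemma apos x : x != 0 -> 0 < a x.
Proof.
have [A [S [z [u [v [Su -> _ [ha _ _]]]]]]] := pair_rep x x.
move=> x0; rewrite ha; apply: nR_gt0; apply: contra x0 => /eqP h.
by rewrite -(mulmxK Su u) h !mul0mx.
Qed.

Lemma par x y : a (x + y) + a (x - y) = 2 * a x + 2 * a y.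
Proof.
have [A [S [z [u [v [Su -> -> [ha _ _]]]]]]] := pair_rep x y.
rewrite -mulmxDl -mulmxBl !ha mulmxDl mulmxBl nRD nRD nRN ipRNr; ring.
Qed.

Definition g x y := (a (x + y) - a (x - y)) / 4.

Lemma gloc x y : exists (A : 'M[Cplx R]_(k, n)) (S : 'M[Cplx R]_k) (u v : 'rV[Cplx R]_k),
  [/\ S \in unitmx, x = u *m A, y = v *m A &
     forall u' v', g (u' *m A) (v' *m A) = ipR (u' *m S) (v' *m S)].
Proof.
have [A [S [z [u [v [Su -> -> [ha _ _]]]]]]] := pair_rep x y.
exists A, S, u, v; split => // u' v'.
rewrite /g -mulmxDl -mulmxBl !ha mulmxDl mulmxBl nRD nRD nRN ipRNr.
by field.
Qed.

Lemma gZ (t : R) x y : g ((t%:C)%C *: x) y = t * g x y.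
Proof.
have [A [S [u [v [Su -> -> hg]]]]] := gloc x y.
by rewrite scalemxAl !hg -scalemxAl ipRZ.
Qed.

Lemma gC x y : g x y = g y x.
Proof. by rewrite /g [y + x]addrC -[y - x]opprB aN. Qed.

Lemma gii x y : g ('i%C *: x) ('i%C *: y) = g x y.
Proof. by rewrite /g -scalerDr -scalerBr !ai. Qed.

Lemma gxx x : g x x = a x.
Proof.
rewrite /g [x - x]subrr a0 subr0.
have -> : x + x = ((2 : R)%:C)%C *: x.
  by rewrite rmorph_nat scaler_nat mulr2n.
by rewrite aZ; field.
Qed.

Lemma g0 y : g 0 y = 0.
Proof. by rewrite /g add0r sub0r aN subrr mul0r. Qed.

Lemma gkey u u' w : g u w + g u' w = g (u + u') (w + w) / 2.
Proof.
have p1 := par (u + w) (u' + w).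
have p2 := par (u - w) (u' - w).
have e1 : u + w + (u' + w) = (u + u') + (w + w) by rewrite addrACA.
have e2 : u + w - (u' + w) = u - u' by rewrite opprD addrACA subrr addr0.
have e3 : u - w + (u' - w) = (u + u') - (w + w) by rewrite addrACA opprD.
have e4 : u - w - (u' - w) = u - u' by rewrite opprB addrA subrK.
rewrite e1 e2 in p1; rewrite e3 e4 in p2.
rewrite /g.
have -> : a (u + u' + (w + w)) = 2 * a (u + w) + 2 * a (u' + w) - a (u - u')
  by rewrite -p1 addrK.
have -> : a (u + u' - (w + w)) = 2 * a (u - w) + 2 * a (u' - w) - a (u - u')
  by rewrite -p2 addrK.
by field.
Qed.

Lemma gD x x' y : g (x + x') y = g x y + g x' y.
Proof.
have h2 u : g u (y + y) = 2 * g u y.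
  by have := gkey u 0 y; rewrite g0 addr0 addr0 => ->; by field.
rewrite gkey h2; by field.
Qed.

Lemma bD x y : b (x + y) = b x + b y.
Proof.
have [A [S [z [u [v [Su -> -> [_ hb _]]]]]]] := pair_rep x y.
by rewrite -mulmxDl !hb mulmxDl ipRD.
Qed.

Lemma bZ (t : R) x : b ((t%:C)%C *: x) = t * b x.
Proof.
have [A [S [z [u [v [Su -> _ [_ hb _]]]]]]] := pair_rep x x.
by rewrite scalemxAl !hb -scalemxAl ipRZ.
Qed.

Lemma Kchar x : K (p0 + x) <-> a x + 2 * b x <= 1.
Proof.
have [A [S [z [u [v [Su -> _ [_ _ hK]]]]]]] := pair_rep x x.
exact: hK.
Qed.

Lemma gN x y : g (- x) y = - g x y.
Proof.
have -> : - x = ((-1 : R)%:C)%C *: x by rewrite rmorphN1 scaleN1r.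
by rewrite gZ mulN1r.
Qed.

Lemma ii : ('i%C * 'i%C : Cplx R) = -1.
Proof. by rewrite -expr2 sqr_i. Qed.

Lemma gix x y : g ('i%C *: x) y = - g x ('i%C *: y).
Proof. by rewrite -gii scalerA ii scaleN1r gN. Qed.

Lemma gxix x : g x ('i%C *: x) = 0.
Proof.
have h1 := gix x x; rewrite gC in h1.
move: h1 => /eqP; rewrite -subr_eq0 opprK -mulr2n mulrn_eq0 /=.
by move/eqP.
Qed.

Definition h x y : Cplx R := (g x y +i* g x ('i%C *: y))%C.

Lemma cplx_eq (x y : Cplx R) : cRe x = cRe y -> cIm x = cIm y -> x = y.
Proof. by case: x => ? ?; case: y => ? ? /= -> ->. Qed.

Lemma hD x x' y : h (x + x') y = h x y + h x' y.
Proof. by apply: cplx_eq; rewrite ?ReD ?ImD /= gD. Qed.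

Lemma hZ (t : R) x y : h ((t%:C)%C *: x) y = (t%:C)%C * h x y.
Proof. by apply: cplx_eq; rewrite ?ReR ?ImR /= gZ. Qed.

Lemma hi x y : h ('i%C *: x) y = 'i%C * h x y.
Proof. by apply: cplx_eq; rewrite ?Rei ?Imi /= ?gii ?gix. Qed.

Lemma hxx x : h x x = ((a x)%:C)%C.
Proof. by apply: cplx_eq; rewrite /= ?gxx ?gxix. Qed.

Lemma zdec (z : Cplx R) : z = ((cRe z)%:C)%C + ((cIm z)%:C)%C * 'i%C.
Proof. by case: z => p q; apply: cplx_eq => /=; ring. Qed.

Lemma hZc (z : Cplx R) x y : h (z *: x) y = z * h x y.
Proof.
have -> : z *: x = ((cRe z)%:C)%C *: x + ((cIm z)%:C)%C *: ('i%C *: x).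
  by rewrite scalerA -scalerDl -zdec.
by rewrite hD !hZ hi mulrA -mulrDl -zdec.
Qed.

Lemma h0 y : h 0 y = 0.
Proof. by apply: cplx_eq; rewrite /= !g0. Qed.

Lemma hsum (F : 'I_n -> V) y : h (\sum_(j < n) F j) y = \sum_(j < n) h (F j) y.
Proof. exact: (big_morph (h^~ y) (fun u v => hD u v y) (h0 y)). Qed.

Definition cj (z : Cplx R) : Cplx R := (cRe z -i* cIm z)%C.

Lemma conjE (z : Cplx R) : Num.conj z = cj z.
Proof. by case: z. Qed.

Lemma cjM (z w : Cplx R) : cj (z * w) = cj z * cj w.
Proof. by case: z => ? ?; case: w => ? ?; apply: cplx_eq => /=; ring. Qed.

Lemma cjD (z w : Cplx R) : cj (z + w) = cj z + cj w.
Proof. by case: z => ? ?; case: w => ? ?; apply: cplx_eq => /=; ring. Qed.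

Lemma cj0 : cj 0 = 0.
Proof. by apply: cplx_eq => /=; ring. Qed.

Lemma cjK (z : Cplx R) : cj (cj z) = z.
Proof. by case: z => ? ?; apply: cplx_eq => /=; ring. Qed.

Lemma hC x y : h y x = cj (h x y).
Proof.
apply: cplx_eq.
  exact: gC.
change (g y ('i%C *: x) = - g x ('i%C *: y)).
by rewrite gC gix.
Qed.

Lemma hZr (z : Cplx R) x y : h x (z *: y) = cj z * h x y.
Proof. by rewrite hC hZc cjM -hC. Qed.

Lemma hsumr (F : 'I_n -> V) x : h x (\sum_(j < n) F j) = \sum_(j < n) h x (F j).
Proof.
rewrite hC hsum (big_morph cj cjD cj0); apply: eq_bigr => j _.
by rewrite -hC.
Qed.

End W6.


Section W7.
Local Open Scope sesquilinear_scope.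
Variable R : realType.
Arguments nR {R m}.
Arguments ipR {R m}.
Local Notation cRe := complex.Re.
Local Notation cIm := complex.Im.
Local Notation cj := (cj R).
Arguments zdec {R}.
Arguments cplx_eq {R}.
Arguments cjM {R}.
Arguments cjD {R}.
Arguments cjK {R}.
Arguments conjE {R}.
Variables (n : nat) (K : set 'rV[Cplx R]_n) (p0 : 'rV[Cplx R]_n).
Local Notation V := 'rV[Cplx R]_n.
Variables (a b : V -> R) (h : V -> V -> Cplx R).
Hypothesis hZc : forall z x y, h (z *: x) y = z * h x y.
Hypothesis hsum : forall (F : 'I_n -> V) y, h (\sum_(j < n) F j) y = \sum_(j < n) h (F j) y.
Hypothesis hZr : forall z x y, h x (z *: y) = cj z * h x y.
Hypothesis hsumr : forall (F : 'I_n -> V) x, h x (\sum_(j < n) F j) = \sum_(j < n) h x (F j).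
Hypothesis hC : forall x y, h y x = cj (h x y).
Hypothesis hxx : forall x, h x x = ((a x)%:C)%C.
Hypothesis apos : forall x, x != 0 -> 0 < a x.
Hypothesis bD : forall x y, b (x + y) = b x + b y.
Hypothesis bZ : forall (t : R) x, b ((t%:C)%C *: x) = t * b x.
Hypothesis Kchar : forall x, K (p0 + x) <-> a x + 2 * b x <= 1.

Definition e (i : 'I_n) : V := delta_mx 0 i.
Definition H : 'M[Cplx R]_n := \matrix_(i, j) h (e i) (e j).

Lemma hH x y : h x y = (x *m H *m y ^t*) 0 0.
Proof.
rewrite {1}(row_sum_delta x) {1}(row_sum_delta y) hsum.
transitivity (\sum_i \sum_j x 0 i * (cj (y 0 j) * H i j)).
  apply: eq_bigr => i _; rewrite hZc hsumr mulr_sumr; apply: eq_bigr => j _.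
  by rewrite hZr mxE.
rewrite mxE exchange_big /=; apply: eq_bigr => j _.
rewrite !mxE conjE mulr_suml; apply: eq_bigr => i _.
by rewrite !mxE [cj _ * _]mulrC mulrA.
Qed.

Lemma Hherm : H ^t* = H.
Proof. by apply/matrixP => i j; rewrite !mxE conjE -hC. Qed.

Definition P := spectralmx H.
Definition D := spectral_diag H.

Lemma Pu : P \is unitarymx.
Proof. exact: spectral_unitarymx. Qed.

Lemma HPD : H = invmx P *m diag_mx D *m P.
Proof. by apply/orthomx_spectralP; apply/normalmxP; rewrite Hherm. Qed.

Lemma PPt : P *m P ^t* = 1%:M.
Proof. exact/unitarymxP/Pu. Qed.

Lemma quad (x : V) : (x *m H *m x ^t*) 0 0 =
  \sum_l (x *m P ^t*) 0 l * D 0 l * cj ((x *m P ^t*) 0 l).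
Proof.
have E : P *m x ^t* = (x *m P ^t*) ^t*.
  by rewrite trmx_mul map_mxM trmxCK.
rewrite HPD (invmx_unitary Pu).
have -> : x *m (P ^t* *m diag_mx D *m P) *m x ^t* =
    (x *m P ^t* *m diag_mx D) *m (P *m x ^t*) by rewrite !mulmxA.
rewrite E mul_mx_diag mxE; apply: eq_bigr => l _.
by rewrite !mxE conjE.
Qed.

Lemma cj1 : cj 1 = 1.
Proof. by apply: cplx_eq => /=; rewrite ?oppr0. Qed.

Lemma cjR (r : R) : cj ((r%:C)%C) = ((r%:C)%C).
Proof. by apply: cplx_eq => /=; rewrite ?oppr0. Qed.

Lemma De l : D 0 l = ((a (e l *m P))%:C)%C.
Proof.
rewrite -hxx hH quad.
have -> : e l *m P *m P ^t* = e l by rewrite -mulmxA PPt mulmx1.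
rewrite (bigD1 l) //= big1 ?addr0.
  by rewrite /e !mxE !eqxx /= cj1 mul1r mulr1.
move=> l' nl; rewrite /e !mxE eqxx /= (negbTE nl).
by rewrite mul0r mul0r.
Qed.

Lemma Dpos l : 0 < a (e l *m P).
Proof.
apply: apos; apply/eqP => h0.
have : e l = 0 by rewrite -[e l]mulmx1 -PPt mulmxA h0 mul0mx.
move/rowP/(_ l); rewrite /e !mxE !eqxx /= => /eqP.
by rewrite ?mulr1n oner_eq0.
Qed.

Definition s : V := \row_l ((Num.sqrt (a (e l *m P)))%:C)%C.
Definition M := P ^t* *m diag_mx s.

Lemma nRC m (u : 'rV[Cplx R]_m) : ((nR u)%:C)%C = \sum_i u 0 i * cj (u 0 i).
Proof.
rewrite /nR rmorph_sum; apply: eq_bigr => i _.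
case: (u 0 i) => p q; apply: cplx_eq => /=; ring.
Qed.

Lemma scal (y : Cplx R) (q : R) :
  y * ((q ^+ 2)%:C)%C * cj y = y * (q%:C)%C * cj (y * (q%:C)%C).
Proof. by case: y => y1 y2; apply: cplx_eq => /=; ring. Qed.

Lemma aM (x : V) : a x = nR (x *m M).
Proof.
apply: (@complexI R); rewrite -hxx hH quad nRC.
rewrite /M mulmxA mul_mx_diag; apply: eq_bigr => l _.
rewrite !mxE De.
have q0 := Dpos l.
set q := Num.sqrt _.
have hq : q ^+ 2 = a (e l *m P) by rewrite sqr_sqrtr // ltW.
rewrite -hq; exact: scal.
Qed.

Lemma Mu : M \in unitmx.
Proof.
rewrite unitmx_mul unitarymx_unit ?trmxC_unitary ?Pu //=.
rewrite unitmxE det_diag unitfE; apply/prodf_neq0 => l _.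
rewrite mxE; apply/eqP => /(congr1 (@complex.Re R)) /= /eqP.
by rewrite sqrtr_eq0 leNgt Dpos.
Qed.

Definition lf (y : V) := b (y *m invmx M).
Definition m0 : V := \row_j ((lf (e j)) +i* (lf ('i%C *: e j)))%C.

Lemma b0' : b 0 = 0.
Proof. by have := bZ 0 0; rewrite scaler0 mul0r. Qed.

Lemma lfD y y' : lf (y + y') = lf y + lf y'.
Proof. by rewrite /lf mulmxDl bD. Qed.

Lemma lfZ (t : R) y : lf ((t%:C)%C *: y) = t * lf y.
Proof. by rewrite /lf -scalemxAl bZ. Qed.

Lemma lf0 : lf 0 = 0.
Proof. by rewrite /lf mul0mx b0'. Qed.

Lemma lfsum (F : 'I_n -> V) : lf (\sum_(j < n) F j) = \sum_(j < n) lf (F j).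
Proof. exact: (big_morph lf lfD lf0). Qed.

Lemma lfip y : lf y = ipR y m0.
Proof.
rewrite {1}(row_sum_delta y) lfsum /ipR; apply: eq_bigr => j _.
rewrite {1}(zdec (y 0 j)) scalerDl -scalerA lfD !lfZ !mxE /=.
by [].
Qed.

Lemma bM x : b x = ipR (x *m M) m0.
Proof. by rewrite -lfip /lf mulmxK // Mu. Qed.

Lemma aux2 (N w : R) : 0 <= N -> ((1 + N) * w - N <= 1) = (w <= 1).
Proof. by move=> N0; apply/idP/idP => h1; nra. Qed.

Lemma final : ellipsoid_in n [set: V] K.
Proof.
pose r2 := 1 + nR m0.
have r20 : 0 < r2 by rewrite /r2 (lt_le_trans ltr01) // lerDl nR_ge0.
pose r := Num.sqrt r2.
have r0 : 0 < r by rewrite sqrtr_gt0.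
have rr : r ^+ 2 = r2 by rewrite sqr_sqrtr // ltW.
pose c := p0 - m0 *m invmx M.
pose B := ((r%:C)%C) *: invmx M.
have rC0 : (r%:C)%C != 0 :> Cplx R.
  by apply/eqP => /(congr1 (@complex.Re R)) /= /eqP; rewrite gt_eqF.
have Bu : B \in unitmx by rewrite unitmxZ ?unitfE // unitmx_inv Mu.
have KB w : K (c + w *m B) <-> nR w <= 1.
  have -> : c + w *m B = p0 + (((r%:C)%C *: w - m0) *m invmx M).
    rewrite /c /B -scalemxAr mulmxBl -scalemxAl.
    by rewrite addrAC -addrA.
  rewrite Kchar aM bM mulmxKV ?Mu //.
  rewrite nRD nRZ nRN ipRNr ipRD ipRZ ipRN ipRR rr.
  have -> : r2 * nR w + 2 * - (r * ipR w m0) + nR m0 +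
     2 * (r * ipR w m0 + - nR m0) = (1 + nR m0) * nR w - nR m0 by rewrite /r2; ring.
  by rewrite aux2 ?nR_ge0.
exists c, B; split.
- by rewrite row_free_unit.
- by [].
apply/seteqP; split => q.
- move=> Kq; exists ((q - c) *m invmx B); last by rewrite mulmxKV // addrC subrK.
  rewrite /unit_ball /= nR_ball; apply/KB.
  by rewrite mulmxKV // addrC subrK.
- by case=> w wb <-; apply/KB; rewrite -nR_ball.
Qed.

End W7.

Theorem theorem4p1 (R : realType) (k n : nat) (hk : (2 <= k)%N) (hkn : (k < n)%N)
    (K : set 'rV[Cplx R]_n) (p0 : 'rV[Cplx R]_n) :
  convex_body K ->
  interior K p0 ->
  (forall A : 'M[Cplx R]_(k, n), row_free A ->
     ellipsoid_in k (affine_span p0 A) (affine_span p0 A `&` K)) ->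
  ellipsoid_in n [set: 'rV[Cplx R]_n] K.

Proof.
move=> _ p0int hyp.
apply: (@final R n K p0 (aa R n K p0) (bb R n K p0) (h R n K p0)).
- exact: (@hZc R n k K p0 hk hkn p0int hyp).
- exact: (@hsum R n k K p0 hk hkn p0int hyp).
- exact: (@hZr R n k K p0 hk hkn p0int hyp).
- exact: (@hsumr R n k K p0 hk hkn p0int hyp).
- exact: (@hC R n k K p0 hk hkn p0int hyp).
- exact: (@hxx R n k K p0 hk hkn p0int hyp).
- exact: (@apos R n k K p0 hk hkn p0int hyp).
- exact: (@bD R n k K p0 hk hkn p0int hyp).
- exact: (@bZ R n k K p0 hk hkn p0int hyp).
- exact: (@Kchar R n k K p0 hk hkn p0int hyp).
Qed.
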